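(* Let $m\ge1$ and let $v_1,\ldots,v_n$ be vectors in $\mathbb{R}^d$ ($d\ge2$), not all zero, with $m$-weights $w_j=\|v_j\|^m/\sum_\ell\|v_\ell\|^m$. Then $$\sum_{j=1}^n\sum_{k=1}^n\langle v_j,v_k\rangle^m\ \ge\ b_m(\mathbb{R}^d)\Bigl(\sum_{\ell=1}^n\|v_\ell\|^m\Bigr)^2,$$ with equality if and only if $(v_j)$ gives a weighted spherical half-design of order $m$. Moreover, $(v_j)$ gives a weighted spherical $m$-design if and only if, in addition, there is equality in $$\sum_{j=1}^n\sum_{k=1}^n\|v_j\|\|v_k\|\langle v_j,v_k\rangle^{m-1}\ \ge\ b_{m-1}(\mathbb{R}^d)\Bigl(\sum_{\ell=1}^n\|v_\ell\|^m\Bigr)^2.$$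
   Context: $b_m(\mathbb{R}^d)=\int_{\mathbb{S}}\int_{\mathbb{S}}\langle x,y\rangle^m d\sigma(x)d\sigma(y)$ ($\sigma$ normalised surface measure on the unit sphere $\mathbb{S}$), equal to $0$ for $m$ odd and $\frac{1\cdot3\cdots(m-1)}{d(d+2)\cdots(d+m-2)}$ for $m$ even, with $b_0=1$. ''$(v_j)$ gives a weighted design for $P$'' means that the points $v_j/\|v_j\|$ (for $v_j\neq0$; zero vectors have weight $0$) with the $m$-weights $w_j$ satisfy $\int_{\mathbb{S}}p\,d\sigma=\sum_jw_jp(v_j/\|v_j\|)$ for all $p\in P$. A half-design of order $m$ uses $P=\operatorname{Hom}_m(\mathbb{R}^d)$ (homogeneous polynomials of degree $m$); an $m$-design uses $P=$ all polynomials of degree $\le m$. *)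

(* Defs.v *)
From HB Require Import structures.
From mathcomp Require Import all_boot all_order all_algebra.
From mathcomp Require Import all_classical all_reals all_analysis.
From mathcomp Require mpoly.



Unset Printing Implicit Defensive.
Import Order.TTheory GRing.Theory Num.Theory.
Local Open Scope classical_set_scope.
Local Open Scope ring_scope.

(* Points of R^d are d-tuples of reals; d.-tuple R carries the product
   (= Borel) sigma-algebra from mathcomp-analysis (measurable_tuple). *)

Definition zerov {R : realType} (d : nat) : d.-tuple R := [tuple (0:R) | _ < d].

Definition dotv {R : realType} {d : nat} (x y : d.-tuple R) : R :=
  \sum_(i < d) tnth x i * tnth y i.

Definition normv {R : realType} {d : nat} (x : d.-tuple R) : R :=
  Num.sqrt (dotv x x).

Definition sphere (R : realType) (d : nat) : set (d.-tuple R) :=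
  [set x | normv x = 1].

Definition mx_act {R : realType} {d : nat} (Q : 'M[R]_d) (x : d.-tuple R)
  : d.-tuple R := [tuple \sum_(j < d) Q i j * tnth x j | i < d].

Definition orthogonal_mx {R : realType} {d : nat} (Q : 'M[R]_d) : Prop :=
  Q *m Q^T = 1%:M.

(* sigma is the normalised surface measure on S: a probability measure on
   R^d carried by the unit sphere and invariant under the orthogonal group
   (this characterises the normalised surface measure uniquely). *)
Definition normalised_surface_measure {R : realType} {d : nat}
  (sigma : probability (d.-tuple R) R) : Prop :=
  sigma (sphere R d) = 1%E /\
  forall Q : 'M[R]_d, orthogonal_mx Q ->
  forall A : set (d.-tuple R), measurable A ->
    sigma (mx_act Q @^-1` A) = sigma A.

Definition sph_int {R : realType} {d : nat}
  (sigma : probability (d.-tuple R) R) (f : d.-tuple R -> R) : \bar R :=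
  (\int[sigma]_(x in sphere R d) (f x)%:E)%E.

Definition bm {R : realType} {d : nat}
  (sigma : probability (d.-tuple R) R) (m : nat) : \bar R :=
  (\int[sigma]_(y in sphere R d) \int[sigma]_(x in sphere R d)
      (dotv x y ^+ m)%:E)%E.

Definition peval {R : realType} {d : nat} (p : mpoly.mpoly d R)
  (x : d.-tuple R) : R := mpoly.meval (fun i => tnth x i) p.

Definition mdeg_measure (d : nat) : mpoly.Measure.type d :=
  mpoly.Measure.Pack (mpoly.Measure.Class
    (mpoly.isMeasure.Build d (@mpoly.mdeg d) (@mpoly.mdeg0 d) (@mpoly.mdegD d))).

Definition homog_poly {R : realType} {d : nat} (m : nat)
  (p : mpoly.mpoly d R) : Prop :=
  p \is mpoly.ishomog1 m (mdeg_measure d).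

(* polynomials of degree <= m *)
Definition deg_le_poly {R : realType} {d : nat} (m : nat)
  (p : mpoly.mpoly d R) : Prop :=
  (mpoly.mmeasure (mdeg_measure d) p <= m.+1)%N.

Definition normalize {R : realType} {d : nat} (x : d.-tuple R) : d.-tuple R :=
  [tuple tnth x i / normv x | i < d].

Definition mweight {R : realType} {d n : nat} (m : nat)
  (v : 'I_n -> d.-tuple R) (j : 'I_n) : R :=
  normv (v j) ^+ m / \sum_(l < n) normv (v l) ^+ m.

Definition weighted_design {R : realType} {d n : nat}
  (sigma : probability (d.-tuple R) R) (m : nat)
  (P : mpoly.mpoly d R -> Prop) (v : 'I_n -> d.-tuple R) : Prop :=
  forall p, P p ->
    sph_int sigma (peval p) =
    (\sum_(j < n | v j != zerov d) mweight m v j * peval p (normalize (v j)))%:E.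

Definition half_design {R : realType} {d n : nat}
  (sigma : probability (d.-tuple R) R) (m : nat) (v : 'I_n -> d.-tuple R) :=
  weighted_design sigma m (homog_poly m) v.

Definition sph_design {R : realType} {d n : nat}
  (sigma : probability (d.-tuple R) R) (m : nat) (v : 'I_n -> d.-tuple R) :=
  weighted_design sigma m (deg_le_poly m) v.

(* Main.v *)
Require Import Defs.
From HB Require Import structures.
From mathcomp Require Import all_boot all_order all_algebra.
From mathcomp Require Import all_classical all_reals all_analysis.
From mathcomp Require mpoly.
Import (canonicals, coercions) mpoly.
From mathcomp Require Import ring lra zify.
From mathcomp Require Import measurable_realfun.
Import Order.TTheory GRing.Theory Num.Theory.
Local Open Scope classical_set_scope.
Local Open Scope ring_scope.

Definition Pm {R : realType} {d : nat} (s : seq 'I_d) (x : d.-tuple R) : R :=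
  \prod_(i <- s) tnth x i.

Lemma Pm_cat {R : realType} {d} (s1 s2 : seq 'I_d) (x : d.-tuple R) :
  Pm (s1 ++ s2) x = Pm s1 x * Pm s2 x.
Proof. by rewrite /Pm big_cat. Qed.

Lemma Pm_codom {R : realType} {d k} (f : {ffun 'I_k -> 'I_d}) (x : d.-tuple R) :
  Pm (codom f) x = \prod_(t < k) tnth x (f t).
Proof. by rewrite /Pm /codom big_image. Qed.

Lemma dot_expand {R : realType} {d} k (x y : d.-tuple R) :
  dotv x y ^+ k = \sum_(f : {ffun 'I_k -> 'I_d}) Pm (codom f) x * Pm (codom f) y.
Proof.
have -> : dotv x y ^+ k = \prod_(t < k) dotv x y by rewrite prodr_const card_ord.
rewrite /dotv bigA_distr_bigA; apply: eq_bigr => f _.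
by rewrite !Pm_codom -big_split.
Qed.

Lemma dotvC {R : realType} {d} (x y : d.-tuple R) : dotv x y = dotv y x.
Proof. by rewrite /dotv; apply: eq_bigr => i _; rewrite mulrC. Qed.

Lemma dotv_ge0 {R : realType} {d} (x : d.-tuple R) : 0 <= dotv x x.
Proof. by rewrite /dotv; apply: sumr_ge0 => i _; rewrite -expr2 sqr_ge0. Qed.

Lemma normv_sqr {R : realType} {d} (x : d.-tuple R) : normv x ^+ 2 = dotv x x.
Proof. by rewrite /normv sqr_sqrtr // dotv_ge0. Qed.

Lemma normv_ge0 {R : realType} {d} (x : d.-tuple R) : 0 <= normv x.
Proof. exact: sqrtr_ge0. Qed.

Lemma tnth_zerov {R : realType} {d} i : tnth (zerov d) i = 0 :> R.
Proof. by rewrite /zerov tnth_mktuple. Qed.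

Lemma normv_eq0 {R : realType} {d} (x : d.-tuple R) : (normv x == 0) = (x == zerov d).
Proof.
apply/idP/eqP => [|->]; last first.
  rewrite /normv /dotv; under eq_bigr do rewrite tnth_zerov mulr0.
  by rewrite big1 // sqrtr0.
rewrite /normv sqrtr_eq0 => h.
have h0 : dotv x x = 0 by apply/eqP; rewrite eq_le h dotv_ge0.
apply: eq_from_tnth => i; rewrite tnth_zerov.
have := @psumr_eq0P R _ xpredT (fun i => tnth x i * tnth x i).
move=> /(_ (fun i _ => ltac:(by rewrite -expr2 sqr_ge0)) h0 i isT) /eqP.
by rewrite mulf_eq0 orbb => /eqP.
Qed.

Lemma sphereE {R : realType} {d} (x : d.-tuple R) : sphere R d x <-> dotv x x = 1.
Proof.
rewrite /sphere /=; split => [h|h].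
  by rewrite -normv_sqr h expr1n.
by rewrite /normv h sqrtr1.
Qed.

Lemma tnth_normalize {R : realType} {d} (x : d.-tuple R) i :
  tnth (normalize x) i = tnth x i / normv x.
Proof. by rewrite /normalize tnth_mktuple. Qed.

Lemma normalize_sphere {R : realType} {d} (x : d.-tuple R) :
  x != zerov d -> sphere R d (normalize x).
Proof.
move=> hx; apply/sphereE; rewrite /dotv.
have hn : normv x != 0 by rewrite normv_eq0.
under eq_bigr do rewrite !tnth_normalize mulrACA.
rewrite -mulr_suml -/(dotv x x) -normv_sqr.
by rewrite -invfM -expr2 mulfV // expf_neq0.
Qed.

Lemma Pm_normalize {R : realType} {d} (s : seq 'I_d) (x : d.-tuple R) :
  x != zerov d -> Pm s x = normv x ^+ size s * Pm s (normalize x).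
Proof.
move=> hx; have hn : normv x != 0 by rewrite normv_eq0.
elim: s => [|i s IH]; first by rewrite /Pm !big_nil mulr1.
rewrite /Pm !big_cons -!/(Pm _ _) IH tnth_normalize /= exprS.
by field.
Qed.

Lemma Pm_zerov {R : realType} {d} (s : seq 'I_d) :
  s != [::] -> Pm s (zerov d) = 0 :> R.
Proof.
by case: s => [//|i s] _; rewrite /Pm big_cons tnth_zerov mul0r.
Qed.

Lemma coord_le1 {R : realType} {d} (x : d.-tuple R) i :
  dotv x x = 1 -> `|tnth x i| <= 1.
Proof.
move=> h.
have : tnth x i * tnth x i <= 1.
  rewrite -h /dotv (bigD1 i) //= lerDl.
  by apply: sumr_ge0 => j _; rewrite -expr2 sqr_ge0.
move=> hle; rewrite ler_norml; apply/andP; split; nra.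
Qed.

Lemma Pm_bound {R : realType} {d} (s : seq 'I_d) (x : d.-tuple R) :
  dotv x x = 1 -> `|Pm s x| <= 1.
Proof.
move=> h; elim: s => [|i s IH]; first by rewrite /Pm big_nil normr1.
rewrite /Pm big_cons normrM; apply: mulr_ile1 => //; exact: coord_le1.
Qed.

Lemma mPm {R : realType} {d} (s : seq 'I_d) :
  measurable_fun [set: d.-tuple R] (Pm s).
Proof.
elim: s => [|i s IH].
  have -> : Pm (R:=R) (d:=d) [::] = cst (1 : R) by apply: boolp.funext => x; rewrite /Pm big_nil.
  exact: measurable_cst.
have -> : Pm (R:=R) (i :: s) = (fun x : d.-tuple R => tnth x i * Pm s x).
  by apply: boolp.funext => x; rewrite /Pm big_cons.
apply: measurable_funM => //; exact: measurable_tnth.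
Qed.

Lemma measurable_fun_bigsum {R : realType} {d} (I : Type) (r : seq I)
  (F : I -> d.-tuple R -> R) :
  (forall i, measurable_fun [set: d.-tuple R] (F i)) ->
  measurable_fun [set: d.-tuple R] (fun x => \sum_(i <- r) F i x).
Proof.
move=> hF; elim: r => [|i r IH].
  have -> : (fun x : d.-tuple R => \sum_(i <- [::]) F i x) = cst 0.
    by apply: boolp.funext => x; rewrite big_nil.
  exact: measurable_cst.
have -> : (fun x : d.-tuple R => \sum_(j <- i :: r) F j x) =
          (fun x => F i x + \sum_(j <- r) F j x).
  by apply: boolp.funext => x; rewrite big_cons.
exact: measurable_funD.
Qed.

Lemma mdotself {R : realType} {d} :
  measurable_fun [set: d.-tuple R] (fun x => dotv x x).
Proof.
have -> : (fun x : d.-tuple R => dotv x x) =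
          (fun x => \sum_(i <- index_enum 'I_d) Pm [:: i; i] x).
  by apply: boolp.funext => x; rewrite /dotv; apply: eq_bigr => i _;
     rewrite /Pm !big_cons big_nil mulr1.
by apply: measurable_fun_bigsum => i; exact: mPm.
Qed.

Lemma msphere {R : realType} {d} : measurable (sphere R d).
Proof.
have -> : sphere R d = [set: d.-tuple R] `&` (fun x => dotv x x) @^-1` [set 1].
  apply/seteqP; split => x /=.
    by move/sphereE.
  by case=> _ /sphereE.
exact: mdotself.
Qed.

Lemma intPm {R : realType} {d} (sigma : probability (d.-tuple R) R) (s : seq 'I_d) :
  sigma.-integrable (sphere R d) (EFin \o Pm s).
Proof.
apply: measurable_bounded_integrable.
- exact: msphere.
- exact: (le_lt_trans (probability_le1 sigma msphere) (ltry 1)).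
- apply: measurable_funTS; exact: mPm.
- exists 1; split; first by rewrite num_real.
  move=> M M1 x /sphereE hx; rewrite /=; exact: le_trans (Pm_bound s x hx) (ltW M1).
Qed.

Definition pa {R : realType} {d} (sigma : probability (d.-tuple R) R) (s : seq 'I_d) : R :=
  fine (sph_int sigma (Pm s)).

Lemma sph_int_Pm {R : realType} {d} (sigma : probability (d.-tuple R) R) (s : seq 'I_d) :
  sph_int sigma (Pm s) = (pa sigma s)%:E.
Proof.
rewrite /pa fineK //; apply: (integrable_fin_num msphere); exact: intPm.
Qed.

Lemma intlin_integrable {R : realType} {d} (sigma : probability (d.-tuple R) R)
  (I : Type) (r : seq I) (c : I -> R) (s : I -> seq 'I_d) :
  sigma.-integrable (sphere R d)
    (EFin \o (fun x => \sum_(i <- r) c i * Pm (s i) x)).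
Proof.
apply: (eq_integrable msphere (fun x => \sum_(i <- r) ((c i)%:E * (Pm (s i) x)%:E))%E).
  by move=> x _ /=; rewrite -sumEFin; apply: eq_bigr => i _; rewrite EFinM.
apply: (integrable_sum msphere) => i _.
apply: (integrableZl msphere); exact: intPm.
Qed.

Lemma int_lin {R : realType} {d} (sigma : probability (d.-tuple R) R)
  (I : Type) (r : seq I) (c : I -> R) (s : I -> seq 'I_d) :
  sph_int sigma (fun x => \sum_(i <- r) c i * Pm (s i) x) =
  (\sum_(i <- r) c i * pa sigma (s i))%:E.
Proof.
rewrite /sph_int.
under eq_integral => x _.
  rewrite -sumEFin.
  under eq_bigr do rewrite EFinM.
  over.
rewrite (integral_sum msphere); last first.
  move=> i; apply: (integrableZl msphere); exact: intPm.
rewrite -sumEFin; apply: eq_bigr => i _.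
rewrite (integralZl msphere); last exact: intPm.
by rewrite -/(sph_int sigma (Pm (s i))) sph_int_Pm EFinM.
Qed.

Lemma tnth_mx_act {R : realType} {d} (A : 'M[R]_d) (x : d.-tuple R) i :
  tnth (mx_act A x) i = \sum_(j < d) A i j * tnth x j.
Proof. by rewrite /mx_act tnth_mktuple. Qed.

Lemma mx_act_dot {R : realType} {d} (A : 'M[R]_d) (x y : d.-tuple R) :
  dotv (mx_act A x) y = dotv x (mx_act A^T y).
Proof.
rewrite /dotv; under eq_bigr do rewrite tnth_mx_act mulr_suml.
under [RHS]eq_bigr do rewrite tnth_mx_act mulr_sumr.
rewrite exchange_big /=; apply: eq_bigr => j _; apply: eq_bigr => i _.
by rewrite mxE; ring.
Qed.

Lemma mx_act_mul {R : realType} {d} (A B : 'M[R]_d) (x : d.-tuple R) :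
  mx_act A (mx_act B x) = mx_act (A *m B) x.
Proof.
apply: eq_from_tnth => i; rewrite !tnth_mx_act.
under eq_bigr do rewrite tnth_mx_act mulr_sumr.
rewrite exchange_big /=; apply: eq_bigr => j _.
by rewrite mxE mulr_suml; apply: eq_bigr => l _; ring.
Qed.

Lemma delta_sum {R : realType} {d} (i : 'I_d) (F : 'I_d -> R) :
  \sum_(l < d) (i == l)%:R * F l = F i.
Proof.
rewrite (bigD1 i) //= eqxx mul1r big1 ?addr0 // => l hl.
by rewrite eq_sym (negbTE hl) mul0r.
Qed.

Lemma mx_act1 {R : realType} {d} (x : d.-tuple R) : mx_act 1%:M x = x.
Proof.
apply: eq_from_tnth => i; rewrite tnth_mx_act.
under eq_bigr do rewrite mxE.
rewrite -[RHS](delta_sum i (fun j => tnth x j)); apply: eq_bigr => j _.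
by case: (i == j); rewrite ?mulr1n ?mulr0n.
Qed.

Lemma orthogonal_tr {R : realType} {d} (Q : 'M[R]_d) :
  orthogonal_mx Q -> orthogonal_mx Q^T.
Proof. by rewrite /orthogonal_mx trmxK => /mulmx1C. Qed.

Lemma orth_dot {R : realType} {d} (Q : 'M[R]_d) (y : d.-tuple R) :
  orthogonal_mx Q -> dotv (mx_act Q^T y) (mx_act Q^T y) = dotv y y.
Proof.
by move=> hQ; rewrite mx_act_dot trmxK mx_act_mul hQ mx_act1.
Qed.

Lemma mlin {R : realType} {d} (z : d.-tuple R) :
  measurable_fun [set: d.-tuple R] (fun y => dotv z y).
Proof.
apply: measurable_fun_bigsum => i.
apply: measurable_funM; first exact: measurable_cst.
exact: measurable_tnth.
Qed.

Lemma mmx_act {R : realType} {d} (A : 'M[R]_d) :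
  measurable_fun [set: d.-tuple R] (mx_act A).
Proof.
apply/measurable_fun_tnthP => i.
have -> : (tnth (T:=R))^~ i \o mx_act A = (fun x => \sum_(j < d) A i j * tnth x j).
  by apply: boolp.funext => x /=; rewrite tnth_mx_act.
apply: measurable_fun_bigsum => j.
apply: measurable_funM; first exact: measurable_cst.
exact: measurable_tnth.
Qed.

Definition Gk {R : realType} {d} (sigma : probability (d.-tuple R) R) (k : nat)
  (z : d.-tuple R) : \bar R := sph_int sigma (fun y => dotv z y ^+ k).

Lemma Gk_expand {R : realType} {d} (sigma : probability (d.-tuple R) R) k z :
  Gk sigma k z = (\sum_(f : {ffun 'I_k -> 'I_d}) Pm (codom f) z * pa sigma (codom f))%:E.
Proof.
rewrite /Gk -int_lin; congr sph_int; apply: boolp.funext => y.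
by rewrite dot_expand.
Qed.

Lemma int_dotpow {R : realType} {d} (sigma : probability (d.-tuple R) R) k z :
  sigma.-integrable (sphere R d) (fun y => (dotv z y ^+ k)%:E).
Proof.
have h := intlin_integrable sigma _
   (index_enum {ffun 'I_k -> 'I_d}) (fun f => Pm (codom f) z) (fun f => codom f).
apply: (eq_integrable msphere _ _ _ h).
by move=> y _ /=; rewrite dot_expand.
Qed.

Lemma Gk_inv {R : realType} {d} (sigma : probability (d.-tuple R) R) k z (Q : 'M[R]_d) :
  normalised_surface_measure sigma -> orthogonal_mx Q ->
  Gk sigma k (mx_act Q z) = Gk sigma k z.
Proof.
move=> [_ hinv] hQ.
pose phi := mx_act (d:=d) Q^T.
pose g := fun y : d.-tuple R => (dotv z y ^+ k)%:E.
have mphi : measurable_fun [set: d.-tuple R] phi by exact: mmx_act.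
have mg : measurable_fun [set: d.-tuple R] g.
  by apply/measurable_EFinP; apply: measurable_funX; exact: mlin.
have pre : phi @^-1` sphere R d = sphere R d.
  apply/seteqP; split => y /=; rewrite !sphereE /phi orth_dot //.
have gphi : g \o phi = fun y => (dotv (mx_act Q z) y ^+ k)%:E.
  by apply: boolp.funext => y; rewrite /g /phi /= mx_act_dot.
have intf : sigma.-integrable (phi @^-1` sphere R d) (g \o phi).
  by rewrite pre gphi; exact: int_dotpow.
have h := integral_pushforward mphi mg intf msphere.
rewrite /Gk /sph_int.
transitivity (\int[sigma]_(x in phi @^-1` sphere R d) (g \o phi) x)%E.
  by rewrite pre gphi.
rewrite -h; apply: eq_measure_integral => A mA _.
rewrite /pushforward /phi; apply: hinv => //; exact: orthogonal_tr.
Qed.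

Lemma householder {R : realType} {d} (x y : d.-tuple R) :
  dotv x x = 1 -> dotv y y = 1 ->
  exists Q : 'M[R]_d, orthogonal_mx Q /\ mx_act Q x = y.
Proof.
move=> hx hy.
have [->|hxy] := eqVneq x y.
  exists 1%:M; split; last exact: mx_act1.
  by rewrite /orthogonal_mx trmx1 mulmx1.
pose w : d.-tuple R := [tuple tnth x i - tnth y i | i < d].
have tw i : tnth w i = tnth x i - tnth y i by rewrite tnth_mktuple.
pose n2 := dotv w w.
have hwx : dotv w x = 1 - dotv x y.
  rewrite /dotv; under eq_bigr do rewrite tw mulrBl.
  by rewrite sumrB -/(dotv x x) hx; congr (_ - _); apply: eq_bigr => i _; rewrite mulrC.
have hwy : dotv w y = dotv x y - 1.
  rewrite /dotv; under eq_bigr do rewrite tw mulrBl.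
  by rewrite sumrB -/(dotv y y) hy.
have hn2 : n2 = 2 - 2 * dotv x y.
  rewrite /n2 /dotv; under eq_bigr do rewrite [X in _ * X]tw mulrBr.
  rewrite sumrB -!/(dotv w _) hwx hwy -/(dotv x y); ring.
have n2nz : n2 != 0.
  rewrite /n2 -normv_sqr expf_eq0 /= normv_eq0.
  apply: contra hxy => /eqP hw; apply/eqP; apply: eq_from_tnth => i.
  by apply/eqP; rewrite -subr_eq0 -tw hw tnth_zerov.
pose c := 2 / n2.
exists (\matrix_(i, j) ((i == j)%:R - c * tnth w i * tnth w j)); split.
  apply/matrixP => i j; rewrite !mxE.
  under eq_bigr do rewrite !mxE.
  have e : forall l, ((i == l)%:R - c * tnth w i * tnth w l) *
                     ((j == l)%:R - c * tnth w j * tnth w l) =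
     (i == l)%:R * ((j == l)%:R - c * tnth w j * tnth w l) +
     (- c * tnth w i) * ((j == l)%:R * tnth w l) +
     (c * tnth w i * c * tnth w j) * (tnth w l * tnth w l) :> R.
    by move=> l; ring.
  under eq_bigr do rewrite e.
  rewrite !big_split /= -!mulr_sumr !delta_sum -/(dotv w w) -/n2.
  by rewrite /c eq_sym; field.
apply: eq_from_tnth => i; rewrite tnth_mx_act.
under eq_bigr do rewrite mxE.
have e : forall l, ((i == l)%:R - c * tnth w i * tnth w l) * tnth x l =
   (i == l)%:R * tnth x l + (- c * tnth w i) * (tnth w l * tnth x l) :> R.
  by move=> l; ring.
under eq_bigr do rewrite e.
rewrite big_split /= -mulr_sumr delta_sum -/(dotv w x) hwx /c tw.
have n2nz' : 2 - 2 * dotv x y != 0 by rewrite -hn2.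
rewrite hn2; field => //.
Qed.

Lemma Gk_const {R : realType} {d} (sigma : probability (d.-tuple R) R) k x y :
  normalised_surface_measure sigma -> dotv x x = 1 -> dotv y y = 1 ->
  Gk sigma k y = Gk sigma k x.
Proof.
move=> hs hx hy; have [Q [hQ <-]] := householder x y hx hy.
exact: Gk_inv.
Qed.

Lemma inner_Gk {R : realType} {d} (sigma : probability (d.-tuple R) R) k y :
  (\int[sigma]_(x in sphere R d) (dotv x y ^+ k)%:E)%E = Gk sigma k y.
Proof.
by rewrite /Gk /sph_int; apply: eq_integral => x _; rewrite dotvC.
Qed.

Lemma key {R : realType} {d} (sigma : probability (d.-tuple R) R) k (u0 : d.-tuple R) :
  normalised_surface_measure sigma -> dotv u0 u0 = 1 ->
  bm sigma k = (\sum_(f : {ffun 'I_k -> 'I_d}) pa sigma (codom f) * pa sigma (codom f))%:E /\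
  forall y, dotv y y = 1 ->
    \sum_(f : {ffun 'I_k -> 'I_d}) Pm (codom f) y * pa sigma (codom f) =
    \sum_(f : {ffun 'I_k -> 'I_d}) pa sigma (codom f) * pa sigma (codom f).
Proof.
move=> hs hu0.
have hS := hs.1.
have hb1 : bm sigma k = Gk sigma k u0.
  rewrite /bm.
  transitivity (\int[sigma]_(y in sphere R d) (cst (Gk sigma k u0)) y)%E.
    apply: eq_integral => y; rewrite inE => /sphereE hy.
    by rewrite inner_Gk /= (Gk_const _ _ _ _ hs hu0 hy).
  rewrite integral_cst; last exact: msphere.
  by rewrite -[in RHS](mule1 (Gk sigma k u0)); congr (_ * _)%E.
have hb2 : bm sigma k =
    (\sum_(f : {ffun 'I_k -> 'I_d}) pa sigma (codom f) * pa sigma (codom f))%:E.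
  rewrite /bm.
  transitivity (sph_int sigma (fun y =>
     \sum_(f : {ffun 'I_k -> 'I_d}) pa sigma (codom f) * Pm (codom f) y)).
    apply: eq_integral => y _.
    rewrite inner_Gk Gk_expand; congr EFin; apply: eq_bigr => f _.
    by rewrite mulrC.
  by rewrite int_lin.
split => // y hy.
apply: EFin_inj; rewrite -Gk_expand (Gk_const _ _ _ _ hs hu0 hy) -hb1 hb2 //.
Qed.

Definition L2 {R : realType} {d n} (m : nat) (v : 'I_n -> d.-tuple R)
  (g : d.-tuple R -> R) : R :=
  \sum_(j < n | v j != zerov d) mweight m v j * g (normalize (v j)).

Definition SS {R : realType} {d n} (m : nat) (v : 'I_n -> d.-tuple R) : R :=
  \sum_(l < n) normv (v l) ^+ m.

Lemma SS_gt0 {R : realType} {d n} m (v : 'I_n -> d.-tuple R) :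
  (exists j, v j != zerov d) -> 0 < SS m v.
Proof.
move=> [j hj].
have hp : 0 < normv (v j) ^+ m.
  apply: exprn_gt0; rewrite lt_neqAle normv_ge0 andbT eq_sym normv_eq0 //.
apply: (lt_le_trans hp); rewrite /SS (bigD1 j) //= lerDl.
by apply: sumr_ge0 => i _; apply: exprn_ge0; exact: normv_ge0.
Qed.

Lemma sum_weights {R : realType} {d n} m (v : 'I_n -> d.-tuple R) :
  (1 <= m)%N -> (exists j, v j != zerov d) ->
  \sum_(j < n | v j != zerov d) mweight m v j = 1.
Proof.
move=> hm hex; have hS := SS_gt0 m v hex.
rewrite /mweight -mulr_suml.
have -> : \sum_(j < n | v j != zerov d) normv (v j) ^+ m = SS m v.
  rewrite /SS [RHS](bigID (fun j => v j != zerov d)) /= [X in _ = _ + X]big1 ?addr0 //.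
  move=> j /negPn /eqP ->.
  have -> : normv (zerov d) = 0 :> R by apply/eqP; rewrite normv_eq0.
  by rewrite expr0n eqn0Ngt hm.
by rewrite -/(SS m v) mulfV // gt_eqF.
Qed.

Lemma L2_lin {R : realType} {d n} m (v : 'I_n -> d.-tuple R) (I : Type) (r : seq I)
  (c : I -> R) (g : I -> d.-tuple R -> R) :
  L2 m v (fun x => \sum_(i <- r) c i * g i x) = \sum_(i <- r) c i * L2 m v (g i).
Proof.
rewrite /L2; under eq_bigr do rewrite mulr_sumr.
rewrite exchange_big /=; apply: eq_bigr => i _.
by rewrite mulr_sumr; apply: eq_bigr => j _; ring.
Qed.

Lemma L2_eq {R : realType} {d n} m (v : 'I_n -> d.-tuple R) (g h : d.-tuple R -> R) :
  (forall x, dotv x x = 1 -> g x = h x) -> L2 m v g = L2 m v h.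
Proof.
move=> hgh; rewrite /L2; apply: eq_bigr => j hj; congr (_ * _); apply: hgh.
by apply/sphereE; exact: normalize_sphere.
Qed.

Definition pb {R : realType} {d n} m (v : 'I_n -> d.-tuple R) (s : seq 'I_d) : R :=
  L2 m v (Pm s).

Lemma sum_ab {R : realType} {d n} (sigma : probability (d.-tuple R) R) m k
  (v : 'I_n -> d.-tuple R) :
  normalised_surface_measure sigma -> (1 <= m)%N -> (exists j, v j != zerov d) ->
  \sum_(f : {ffun 'I_k -> 'I_d}) pa sigma (codom f) * pb m v (codom f) =
  \sum_(f : {ffun 'I_k -> 'I_d}) pa sigma (codom f) * pa sigma (codom f).
Proof.
move=> hs hm hex; have [j0 hj0] := hex.
have hu0 : dotv (normalize (v j0)) (normalize (v j0)) = 1.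
  by apply/sphereE; exact: normalize_sphere.
have [_ hk] := key sigma k _ hs hu0.
rewrite /pb /L2; under eq_bigr do rewrite mulr_sumr.
rewrite exchange_big /=.
transitivity (\sum_(j < n | v j != zerov d) mweight m v j *
  \sum_(f : {ffun 'I_k -> 'I_d}) pa sigma (codom f) * pa sigma (codom f)).
  apply: eq_bigr => j hj; rewrite -(hk (normalize (v j))); last first.
    by apply/sphereE; exact: normalize_sphere.
  by rewrite mulr_sumr; apply: eq_bigr => f _; ring.
by rewrite -mulr_suml sum_weights // mul1r.
Qed.

Lemma sq_decomp {R : realType} (I : finType) (a b : I -> R) :
  \sum_i a i * b i = \sum_i a i * a i ->
  \sum_i b i * b i = \sum_i a i * a i + \sum_i (b i - a i) ^+ 2.
Proof.
move=> hab.
have -> : \sum_i (b i - a i) ^+ 2 =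
   \sum_i b i * b i - 2 * \sum_i a i * b i + \sum_i a i * a i.
  rewrite mulr_sumr -sumrB -big_split /=; apply: eq_bigr => i _; ring.
rewrite hab; ring.
Qed.

Lemma lhs_gen {R : realType} {d n} m k (v : 'I_n -> d.-tuple R) (cc : 'I_n -> R) :
  (exists j, v j != zerov d) ->
  (forall j (f : {ffun 'I_k -> 'I_d}), cc j * Pm (codom f) (v j) =
      if v j != zerov d then normv (v j) ^+ m * Pm (codom f) (normalize (v j)) else 0) ->
  \sum_(j < n) \sum_(l < n) cc j * cc l * dotv (v j) (v l) ^+ k =
  SS m v ^+ 2 * \sum_(f : {ffun 'I_k -> 'I_d}) pb m v (codom f) * pb m v (codom f).
Proof.
move=> hex hcc; have hS := SS_gt0 m v hex.
have hsum : forall f : {ffun 'I_k -> 'I_d},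
    \sum_(j < n) cc j * Pm (codom f) (v j) = SS m v * pb m v (codom f).
  move=> f; rewrite /pb /L2 mulr_sumr [RHS]big_mkcond /=; apply: eq_bigr => j _.
  rewrite hcc; case: ifP => _ //.
  rewrite /mweight -/(SS m v); field; exact: lt0r_neq0.
rewrite mulr_sumr.
transitivity (\sum_(f : {ffun 'I_k -> 'I_d})
   (\sum_(j < n) cc j * Pm (codom f) (v j)) * (\sum_(l < n) cc l * Pm (codom f) (v l))).
  symmetry.
  under eq_bigr do rewrite mulr_suml.
  under eq_bigr do under eq_bigr do rewrite mulr_sumr.
  rewrite exchange_big /=; apply: eq_bigr => j _.
  rewrite exchange_big /=; apply: eq_bigr => l _.
  rewrite dot_expand mulr_sumr; apply: eq_bigr => f _; ring.
by apply: eq_bigr => f _; rewrite hsum; ring.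
Qed.

Lemma lhs_m {R : realType} {d n} m (v : 'I_n -> d.-tuple R) :
  (1 <= m)%N -> (exists j, v j != zerov d) ->
  \sum_(j < n) \sum_(l < n) dotv (v j) (v l) ^+ m =
  SS m v ^+ 2 * \sum_(f : {ffun 'I_m -> 'I_d}) pb m v (codom f) * pb m v (codom f).
Proof.
move=> hm hex; rewrite -(lhs_gen m m v (fun _ => 1) hex).
  by apply: eq_bigr => j _; apply: eq_bigr => l _; rewrite mul1r mul1r.
move=> j f; rewrite mul1r; case: ifP => hj.
  by rewrite (Pm_normalize _ _ hj) size_codom card_ord.
move/negbT: hj => /negPn /eqP ->; apply: Pm_zerov.
by rewrite -size_eq0 size_codom card_ord -lt0n.
Qed.

Lemma lhs_m1 {R : realType} {d n} m (v : 'I_n -> d.-tuple R) :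
  (1 <= m)%N -> (exists j, v j != zerov d) ->
  \sum_(j < n) \sum_(l < n) normv (v j) * normv (v l) * dotv (v j) (v l) ^+ m.-1 =
  SS m v ^+ 2 * \sum_(f : {ffun 'I_m.-1 -> 'I_d}) pb m v (codom f) * pb m v (codom f).
Proof.
move=> hm hex; rewrite -(lhs_gen m m.-1 v (fun j => normv (v j)) hex) //.
move=> j f; case: ifP => hj.
  rewrite (Pm_normalize _ _ hj) size_codom card_ord mulrA -exprS prednK //.
move/negbT: hj => /negPn /eqP ->.
have -> : normv (zerov d) = 0 :> R by apply/eqP; rewrite normv_eq0.
by rewrite mul0r.
Qed.

Definition PX {R : realType} {d} (s : seq 'I_d) : mpoly.mpoly d R :=
  \prod_(i <- s) mpoly.mpolyX R (mpoly.mnm1 i).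

Lemma peval_PX {R : realType} {d} (s : seq 'I_d) (x : d.-tuple R) :
  peval (PX s) x = Pm s x.
Proof.
rewrite /peval /PX (big_morph _ (mpoly.mevalM _) (mpoly.meval1 _)).
by apply: eq_bigr => i _; rewrite mpoly.mevalXU.
Qed.

Lemma PX_homog {R : realType} {d} (s : seq 'I_d) :
  homog_poly (size s) (PX (R:=R) s).
Proof.
rewrite /homog_poly; elim: s => [|i s IH].
  by rewrite /PX big_nil; exact: mpoly.dhomog1.
rewrite /PX big_cons /=.
have -> : (size s).+1 = (1 + size s)%N by [].
apply: mpoly.dhomogM => //.
by rewrite mpoly.dhomogX /= mpoly.mdeg1.
Qed.

Lemma PX_deg {R : realType} {d} m (s : seq 'I_d) :
  (size s <= m)%N -> deg_le_poly m (PX (R:=R) s).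
Proof.
move=> hs; rewrite /deg_le_poly mpoly.mmeasureE.
apply/bigmax_leqP_seq => mon hmon _.
have := PX_homog (R:=R) s; rewrite /homog_poly => /mpoly.dhomogP /(_ mon hmon) ->.
by rewrite ltnS.
Qed.

Definition sflat {d} (mon : mpoly.multinom d) : seq 'I_d :=
  flatten [seq nseq (mon i) i | i <- index_enum 'I_d].

Lemma Pm_sflat {R : realType} {d} (mon : mpoly.multinom d) (x : d.-tuple R) :
  Pm (sflat mon) x = \prod_(i < d) tnth x i ^+ mon i.
Proof.
rewrite /Pm /sflat big_flatten /= big_map; apply: eq_bigr => i _.
by rewrite big_nseq iter_mulr_1.
Qed.

Lemma size_sflat {d} (mon : mpoly.multinom d) : size (sflat mon) = mpoly.mdeg mon.
Proof.
rewrite size_flatten /shape -map_comp sumnE big_map mpoly.mdegE.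
by apply: eq_bigr => i _; rewrite /= size_nseq.
Qed.

Lemma peval_decomp {R : realType} {d} (p : mpoly.mpoly d R) :
  peval p = fun x => \sum_(mon <- mpoly.msupp p) mpoly.mcoeff mon p * Pm (sflat mon) x.
Proof.
apply: boolp.funext => x; rewrite /peval {1}(mpoly.mpolyE p).
rewrite (big_morph _ (mpoly.mevalD _) (mpoly.meval0 _)).
by apply: eq_bigr => mon _; rewrite mpoly.mevalZ mpoly.mevalX Pm_sflat.
Qed.

Definition Eg {R : realType} {d n} (sigma : probability (d.-tuple R) R) m
  (v : 'I_n -> d.-tuple R) (g : d.-tuple R -> R) : Prop :=
  sph_int sigma g = (L2 m v g)%:E.

Lemma E_Pm {R : realType} {d n} (sigma : probability (d.-tuple R) R) m
  (v : 'I_n -> d.-tuple R) s :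
  Eg sigma m v (Pm s) <-> pa sigma s = pb m v s.
Proof.
rewrite /Eg sph_int_Pm /pb; split; first by move=> [].
by move=> ->.
Qed.

Lemma E_lin {R : realType} {d n} (sigma : probability (d.-tuple R) R) m
  (v : 'I_n -> d.-tuple R) (I : eqType) (r : seq I) (c : I -> R) (s : I -> seq 'I_d) :
  (forall i, i \in r -> Eg sigma m v (Pm (s i))) ->
  Eg sigma m v (fun x => \sum_(i <- r) c i * Pm (s i) x).
Proof.
move=> h; rewrite /Eg int_lin L2_lin; congr EFin.
apply: eq_big_seq => i hi; congr (_ * _); exact/(E_Pm sigma m v (s i)).1/h.
Qed.

Lemma E_poly {R : realType} {d n} (sigma : probability (d.-tuple R) R) m
  (v : 'I_n -> d.-tuple R) (p : mpoly.mpoly d R) :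
  (forall mon, mon \in mpoly.msupp p -> Eg sigma m v (Pm (sflat mon))) ->
  Eg sigma m v (peval p).
Proof. by move=> h; rewrite peval_decomp; apply: E_lin. Qed.

Lemma E_eqS {R : realType} {d n} (sigma : probability (d.-tuple R) R) m
  (v : 'I_n -> d.-tuple R) (g h : d.-tuple R -> R) :
  (forall x, dotv x x = 1 -> g x = h x) -> Eg sigma m v g -> Eg sigma m v h.
Proof.
move=> hgh; rewrite /Eg (L2_eq m v _ _ hgh) => <-.
rewrite /sph_int; apply: eq_integral => x; rewrite inE => /sphereE hx.
by rewrite hgh.
Qed.

Lemma hd_iff {R : realType} {d n} (sigma : probability (d.-tuple R) R) m k
  (v : 'I_n -> d.-tuple R) :
  weighted_design sigma m (homog_poly k) v <->
  (forall s : seq 'I_d, size s = k -> Eg sigma m v (Pm s)).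
Proof.
split.
  move=> h s hs; have := h (PX s); rewrite -hs => /(_ (PX_homog s)).
  by rewrite /Eg /L2 (_ : peval (PX s) = Pm s) //; apply: boolp.funext => x; rewrite peval_PX.
move=> h p hp; apply: (E_poly sigma m v) => mon hmon.
apply: h; rewrite size_sflat.
by move: hp; rewrite /homog_poly => /mpoly.dhomogP /(_ mon hmon).
Qed.

Lemma design_iff {R : realType} {d n} (sigma : probability (d.-tuple R) R) m
  (v : 'I_n -> d.-tuple R) :
  weighted_design sigma m (deg_le_poly m) v <->
  (forall s : seq 'I_d, (size s <= m)%N -> Eg sigma m v (Pm s)).
Proof.
split.
  move=> h s hs; have := h (PX s) (PX_deg m s hs).
  by rewrite /Eg /L2 (_ : peval (PX s) = Pm s) //; apply: boolp.funext => x; rewrite peval_PX.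
move=> h p hp; apply: (E_poly sigma m v) => mon hmon.
apply: h; rewrite size_sflat.
have := mpoly.mmeasure_mnm_lt (mdeg_measure d) hmon.
by move=> /leq_trans /(_ hp); rewrite ltnS.
Qed.

Lemma down_sizes {R : realType} {d n} (sigma : probability (d.-tuple R) R) m
  (v : 'I_n -> d.-tuple R) :
  (forall s : seq 'I_d, size s = m -> Eg sigma m v (Pm s)) ->
  (forall s : seq 'I_d, size s = m.-1 -> Eg sigma m v (Pm s)) ->
  forall s : seq 'I_d, (size s <= m)%N -> Eg sigma m v (Pm s).
Proof.
move=> hm hm1.
suff H : forall t s, (size s + t)%N = m -> Eg sigma m v (Pm s).
  by move=> s hs; apply: (H (m - size s)%N); rewrite subnKC.
elim/ltn_ind => t IH s hs.
case: t IH hs => [|[|t]] IH hs.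
- by apply: hm; rewrite -hs addn0.
- by apply: hm1; rewrite -hs addn1.
apply: (E_eqS sigma m v
   (fun x => \sum_(i <- index_enum 'I_d) 1 * Pm (s ++ [:: i; i]) x)).
  move=> x hx.
  have -> : Pm s x = Pm s x * dotv x x by rewrite hx mulr1.
  rewrite /dotv mulr_sumr; apply: eq_bigr => i _.
  by rewrite mul1r Pm_cat /Pm !big_cons big_nil mulr1.
apply: E_lin => i _; apply: (IH t) => //.
rewrite size_cat /= -hs; lia.
Qed.

Lemma codom_iff {R : realType} {d n} (sigma : probability (d.-tuple R) R) m k
  (v : 'I_n -> d.-tuple R) :
  (forall f : {ffun 'I_k -> 'I_d}, pa sigma (codom f) = pb m v (codom f)) <->
  (forall s : seq 'I_d, size s = k -> Eg sigma m v (Pm s)).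
Proof.
split.
  move=> h s hs; apply/E_Pm.
  have hs' : size s == k by apply/eqP.
  pose t := Tuple hs'.
  have -> : s = codom [ffun i => tnth t i].
    rewrite codomE -[LHS]/(tval t) -[in LHS](map_tnth_enum t).
    by apply: eq_map => i; rewrite ffunE.
  exact: h.
move=> h f; apply/E_Pm; apply: h; by rewrite size_codom card_ord.
Qed.

Lemma eq_iff_k {R : realType} {d n} (sigma : probability (d.-tuple R) R) m k
  (v : 'I_n -> d.-tuple R) :
  normalised_surface_measure sigma -> (1 <= m)%N -> (exists j, v j != zerov d) ->
  let c := \sum_(f : {ffun 'I_k -> 'I_d}) pa sigma (codom f) * pa sigma (codom f) in
  let B := \sum_(f : {ffun 'I_k -> 'I_d}) pb m v (codom f) * pb m v (codom f) in
  c <= B /\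
  ((forall f : {ffun 'I_k -> 'I_d}, pa sigma (codom f) = pb m v (codom f)) <-> B = c).
Proof.
move=> hs hm hex c B.
have hab := sum_ab sigma m k v hs hm hex.
have hdec := sq_decomp _ _ _ hab.
rewrite -/B -/c in hdec.
have hge : 0 <= \sum_(f : {ffun 'I_k -> 'I_d}) (pb m v (codom f) - pa sigma (codom f)) ^+ 2.
  by apply: sumr_ge0 => f _; exact: sqr_ge0.
split; first by rewrite hdec lerDl.
split.
  move=> h; rewrite hdec big1 ?addr0 // => f _; by rewrite h subrr expr0n.
move=> hBc f.
have h0 : \sum_(f : {ffun 'I_k -> 'I_d}) (pb m v (codom f) - pa sigma (codom f)) ^+ 2 = 0.
  by move: hdec; rewrite hBc; lra.
have := @psumr_eq0P R {ffun 'I_k -> 'I_d} xpredT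
  (fun g => (pb m v (codom g) - pa sigma (codom g)) ^+ 2)
  (fun g _ => sqr_ge0 (pb m v (codom g) - pa sigma (codom g))) h0 f isT.
by move/eqP; rewrite expf_eq0 /= subr_eq0 => /eqP ->.
Qed.

Local Close Scope classical_set_scope.

Theorem theorem4p7 (R : realType) (d n m : nat)
  (sigma : probability (d.-tuple R) R) (v : 'I_n -> d.-tuple R) :
  (2 <= d)%N -> (1 <= m)%N ->
  normalised_surface_measure sigma ->
  (exists j, v j != zerov d) ->
  let S := \sum_(l < n) normv (v l) ^+ m in
  let lhs := \sum_(j < n) \sum_(k < n) dotv (v j) (v k) ^+ m in
  let lhs' := \sum_(j < n) \sum_(k < n)
                normv (v j) * normv (v k) * dotv (v j) (v k) ^+ m.-1 in
  [/\ (bm sigma m * (S ^+ 2)%:E <= lhs%:E)%E,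
      lhs%:E = (bm sigma m * (S ^+ 2)%:E)%E <-> half_design sigma m v,
      (bm sigma m.-1 * (S ^+ 2)%:E <= lhs'%:E)%E &
      sph_design sigma m v <->
        (half_design sigma m v /\ lhs'%:E = (bm sigma m.-1 * (S ^+ 2)%:E)%E)].
Proof.
move=> hd hm hs hex S lhs lhs'.
have [j0 hj0] := hex.
have hu0 : dotv (normalize (v j0)) (normalize (v j0)) = 1.
  by apply/sphereE; exact: normalize_sphere.
have hSpos : 0 < S by exact: (SS_gt0 m v hex).
have hS2 : S ^+ 2 != 0 by rewrite expf_neq0 // lt0r_neq0.
have [bmm _] := key sigma m _ hs hu0.
have [bmm1 _] := key sigma m.-1 _ hs hu0.
have hl : lhs = S ^+ 2 * _ := lhs_m m v hm hex.
have hl' : lhs' = S ^+ 2 * _ := lhs_m1 m v hm hex.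
have [le1 iff1] := eq_iff_k sigma m m v hs hm hex.
have [le2 iff2] := eq_iff_k sigma m m.-1 v hs hm hex.
have half_iff : half_design sigma m v <->
   (forall f : {ffun 'I_m -> 'I_d}, pa sigma (codom f) = pb m v (codom f)).
  rewrite /half_design hd_iff; exact: iff_sym (codom_iff sigma m m v).
have eqE : forall (B c : R), (S ^+ 2 * B)%:E = (c%:E * (S ^+ 2)%:E)%E <-> B = c.
  move=> B c; rewrite -EFinM; split; first by move=> [] /eqP; rewrite mulrC (inj_eq (mulIf hS2)) => /eqP.
  by move=> ->; rewrite mulrC.
have leE : forall (B c : R), c <= B -> (c%:E * (S ^+ 2)%:E <= (S ^+ 2 * B)%:E)%E.
  move=> B c hcB; rewrite -EFinM lee_fin mulrC; apply: ler_wpM2l => //.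
  exact: sqr_ge0.
split.
- by rewrite bmm hl; apply: leE.
- by rewrite bmm hl eqE half_iff; exact: iff_sym iff1.
- by rewrite bmm1 hl'; apply: leE.
- rewrite /sph_design design_iff bmm1 hl' eqE -iff2 half_iff.
  rewrite (codom_iff sigma m m.-1 v) (codom_iff sigma m m v).
  split.
    by move=> h; split => s hs'; apply: h; rewrite hs' ?leq_pred.
  by move=> [h1 h2]; exact: (down_sizes sigma m v h1 h2).
Qed.
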